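(* Let $\mathcal{G}=(V,L)$ be a finite connected undirected graph with monitor set $M$ and non-monitor set $N=V\setminus M$, with measurement paths given by Controllable Arbitrary-path Probing (CAP). Let $S\subseteq N$ and $k\ge1$. Then $S$ is $k$-identifiable if and only if for every set $V'\subseteq N$ with $|V'|\le k-1$, each connected component of $\mathcal{G}-V'$ that contains a node of $S$ contains a monitor.
   Context: $\mathcal{G}-V'$ denotes the graph obtained by deleting the nodes of $V'$ and their incident links. Under CAP, the measurement paths $P$ are all walks in $\mathcal{G}$ (paths or cycles, repeated nodes/links allowed) starting and ending at monitors (possibly the same). A failure set is any $F\subseteq N$; a path fails iff it traverses a node of $F$. $P_F$ is the set of paths in $P$ traversing a node of $F$; $F_1,F_2$ distinguishable iff $P_{F_1}\ne P_{F_2}$. $S\subseteq N$ is $k$-identifiable if any two failure sets $F_1,F_2$ with $|F_1|,|F_2|\le k$ and $F_1\cap S\ne F_2\cap S$ are distinguishable. *)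

(* Defs.v *)
From mathcomp Require Import all_boot.
Set Implicit Arguments. Unset Strict Implicit. Unset Printing Implicit Defensive.

(* A finite undirected simple graph: node type T (finite), adjacency e
   (symmetric, irreflexive).  Monitors: M; non-monitors N = ~: M. *)

Section CAP.
Variables (T : finType) (e : rel T) (M : {set T}).

(* Under CAP, the measurement paths are all walks (repeated nodes allowed)
   starting and ending at monitors: a nonempty node sequence x :: p with
   consecutive nodes adjacent, x a monitor and the last node a monitor. *)
Definition meas_path (w : seq T) : bool :=
  if w is x :: p then [&& x \in M, path e x p & last x p \in M] else false.

Definition P_F (F : {set T}) : pred (seq T) :=
  fun w => meas_path w && has (fun v => v \in F) w.

Definition distinguishable (F1 F2 : {set T}) : Prop :=
  exists w : seq T, P_F F1 w != P_F F2 w.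

Definition k_identifiable (k : nat) (S : {set T}) : Prop :=
  forall F1 F2 : {set T},
    F1 \subset ~: M -> F2 \subset ~: M ->
    #|F1| <= k -> #|F2| <= k ->
    F1 :&: S != F2 :&: S -> distinguishable F1 F2.

Definition del_rel (V' : {set T}) : rel T :=
  fun x y => [&& e x y, x \notin V' & y \notin V'].

End CAP.

(* Main.v *)
Require Import Defs.
From mathcomp Require Import all_boot.

Section Helpers.
Variables (T : finType) (e : rel T) (M : {set T}).
Hypothesis e_sym : symmetric e.

Lemma conn_last (r : rel T) p x y :
  path r x p -> y \in x :: p -> connect r y (last x p).
Proof.
elim: p x y => [|z p IH] x y /=.
  by move=> _; rewrite inE => /eqP ->.
case/andP=> rxz pz; rewrite inE => /orP [/eqP ->|yin].
  by apply: (connect_trans (connect1 rxz)); apply: IH => //; exact: mem_head.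
exact: IH.
Qed.

Lemma del_sym (A : {set T}) : symmetric (del_rel e A).
Proof. by move=> x y; rewrite /del_rel e_sym; case: (e y x); case: (x \in A); case: (y \in A). Qed.

Lemma del_avoid (A : {set T}) p x : path (del_rel e A) x p -> x \notin A ->
  forall y, y \in x :: p -> y \notin A.
Proof.
elim: p x => [|z p IH] x /=.
  by move=> _ hx y; rewrite inE => /eqP ->.
case/andP=> /and3P [_ _ hz] pz hx y; rewrite inE => /orP [/eqP ->//|].
exact: IH.
Qed.

Lemma del_sub (A : {set T}) : subrel (del_rel e A) e.
Proof. by move=> x y /and3P []. Qed.

Lemma walk_dist (F1 F2 : {set T}) x m :
  x \in F1 -> x \notin F2 -> m \in M -> F2 \subset ~: M ->
  connect (del_rel e F2) x m -> distinguishable e M F1 F2.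
Proof.
move=> x1 x2 mM F2N.
rewrite (sym_connect_sym (@del_sym F2)) => /connectP [q pq xq].
have mF2 : m \notin F2.
  by apply/negP=> /(subsetP F2N); rewrite inE mM.
set w := m :: (q ++ rev (belast m q)).
have memw : forall y, y \in w -> y \in m :: q.
  move=> y; rewrite /w inE mem_cat mem_rev => /orP [/eqP ->|/orP [h|h]].
  - exact: mem_head.
  - by rewrite inE h orbT.
  - exact: mem_belast h.
have pw : path (del_rel e F2) m (q ++ rev (belast m q)).
  rewrite cat_path pq /= rev_path.
  by apply: sub_path pq => a b; rewrite del_sym.
have lw : last m (q ++ rev (belast m q)) = m.
  rewrite last_cat.
  have := congr1 (fun s => last m (rev s)) (lastI m q).
  by rewrite rev_rcons /= rev_cons last_rcons => <-.
exists w.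
have mw : meas_path e M w.
  by rewrite /w /meas_path mM lw mM (sub_path (@del_sub F2) pw).
have h1 : has (fun v => v \in F1) w.
  apply/hasP; exists x => //; rewrite /w xq inE mem_cat.
  by case: (q) => [|a q'] /=; rewrite ?eqxx // mem_last orbT.
have h2 : ~~ has (fun v => v \in F2) w.
  apply/hasPn=> y /memw; exact: del_avoid pq mF2 y.
by rewrite /P_F mw h1 (negbTE h2).
Qed.

Lemma del_mono (A B : {set T}) x y : B \subset A ->
  connect (del_rel e A) x y -> connect (del_rel e B) x y.
Proof.
move=> BA; apply: connect_sub => a b /and3P [eab ha hb]; apply: connect1.
apply/and3P; split=> //; apply/negP=> /(subsetP BA) h.
  by rewrite h in ha.
by rewrite h in hb.
Qed.

Definition good (F1 F2 : {set T}) := exists z m, m \in M /\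
  ((z \in F1 /\ z \notin F2 /\ connect (del_rel e F2) z m) \/
   (z \in F2 /\ z \notin F1 /\ connect (del_rel e F1) z m)).

Lemma reach (F1 F2 : {set T}) p : F1 :|: F2 \subset ~: M -> forall x,
  x \notin F1 :&: F2 -> path (del_rel e (F1 :&: F2)) x p -> last x p \in M ->
  good F1 F2 \/ (x \notin F1 :|: F2 /\ connect (del_rel e (F1 :|: F2)) x (last x p)).
Proof.
move=> FN; elim: p => [|y p IH] x hx /=.
  move=> _ xM; right; split=> //.
  by apply/negP=> /(subsetP FN); rewrite inE xM.
case/andP=> /and3P [exy _ hy] py ly.
case: (IH y hy py ly) => [//|[]]; first by left.
move=> yU cy.
case: (boolP (x \in F1 :|: F2)) => xU; last first.
  right; split=> //; apply: connect_trans cy; apply: connect1.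
  by rewrite /del_rel exy xU yU.
left; exists x, (last y p); split=> //.
move: xU hx; rewrite !inE => /orP [x1|x2].
  rewrite x1 /= => nx2; left; split=> //; split=> //.
  have c2 : connect (del_rel e F2) y (last y p).
    by apply: (@del_mono (F1 :|: F2) F2 y (last y p) (subsetUr F1 F2) cy).
  apply: (connect_trans _ c2); apply: connect1.
  by rewrite /del_rel exy nx2; move: yU; rewrite inE negb_or => /andP [_ ->].
rewrite x2 andbT => nx1; right; split=> //; split=> //.
have c2 : connect (del_rel e F1) y (last y p).
  by apply: (@del_mono (F1 :|: F2) F1 y (last y p) (subsetUl F1 F2) cy).
apply: (connect_trans _ c2); apply: connect1.
by rewrite /del_rel exy nx1; move: yU; rewrite inE negb_or => /andP [-> _].
Qed.

End Helpers.

Theorem lemma3 (T : finType) (e : rel T) (M : {set T})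
  (e_sym : symmetric e) (e_irr : irreflexive e)
  (conn : forall x y : T, connect e x y)
  (S : {set T}) (k : nat)
  (HS : S \subset ~: M) (Hk : 1 <= k) :
  k_identifiable e M k S <->
  (forall V' : {set T}, V' \subset ~: M -> #|V'| <= k.-1 ->
     forall s : T, s \in S -> s \notin V' ->
       exists2 m : T, m \in M & connect (del_rel e V') s m).
Proof.
have dsym : forall F1 F2, distinguishable e M F1 F2 -> distinguishable e M F2 F1.
  by move=> F1 F2 [w hw]; exists w; rewrite eq_sym.
split.
- move=> Hid V' VN cV s sS sV.
  case: (boolP [exists m, (m \in M) && connect (del_rel e V') s m]).
    by case/existsP=> m /andP [mM cm]; exists m.
  rewrite negb_exists => /forallP nm; exfalso.
  have sN : s \in ~: M by apply: (subsetP HS).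
  have [w hw] : distinguishable e M (s |: V') V'.
    apply: Hid.
    - by apply/subsetP=> x; rewrite in_setU1 => /orP [/eqP ->//|]; exact: (subsetP VN).
    - exact: VN.
    - rewrite cardsU1 sV; case: k Hk cV => // k' _ /= cV; by rewrite add1n ltnS.
    - by apply: leq_trans cV (leq_pred _).
    - apply/negP=> /eqP /setP /(_ s); rewrite !inE sS eqxx /= andbT.
      by move/negbTE: sV => ->.
  move: hw; rewrite /P_F; case: w => [//|x p].
  case mw: (meas_path e M (x :: p)) => //=.
  have sub : has (fun v => v \in V') (x :: p) -> has (fun v => v \in s |: V') (x :: p).
    by apply: sub_has => v vV; rewrite in_setU1 vV orbT.
  change (has (fun v => v \in s |: V') (x::p) != has (fun v => v \in V') (x::p) -> False).
  case h2: (has (fun v => v \in V') (x :: p)); first by rewrite (sub h2).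
  move=> h1; have {}h1 : has (fun v => v \in s |: V') (x::p).
    by move: h1; case: (has _ _).
  move: h2 => /negbT /hasPn h2.
  have [v vin] := hasP h1.
  rewrite in_setU1 => /orP [/eqP vs|vV]; last by move: (h2 v vin); rewrite vV.
  move: mw; rewrite /meas_path => /and3P [xM px lM].
  have px' : path (del_rel e V') x p.
    apply: (sub_in_path (P := [pred v | v \notin V'])) px.
      by move=> a b; rewrite !inE => ha hb eab; rewrite /del_rel eab ha hb.
    by apply/allP=> a /h2.
  have := @conn_last T _ p x v px' vin; rewrite vs => c.
  by move: (nm (last x p)); rewrite lM c.
- move=> H F1 F2 F1N F2N c1 c2 neq.
  have key : forall (F1 F2 : {set T}) s, F1 \subset ~: M -> F2 \subset ~: M -> #|F1| <= k ->
      s \in F1 -> s \notin F2 -> s \in S -> distinguishable e M F1 F2.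
    move=> G1 G2 s G1N G2N cG s1 s2 sS.
    have I12 : G1 :&: G2 \subset G1 :\ s.
      apply/subsetP=> x; rewrite !inE => /andP [x1 x2]; rewrite x1 andbT.
      by apply/negP=> /eqP xs; move: x2; rewrite xs (negbTE s2).
    have sI : s \notin G1 :&: G2 by rewrite inE (negbTE s2) andbF.
    have [m mM cm] : exists2 m, m \in M & connect (del_rel e (G1 :&: G2)) s m.
      apply: H => //.
      - by apply: subset_trans G1N; apply: subsetIl.
      - apply: leq_trans (subset_leq_card I12) _.
        move: cG; rewrite (cardsD1 s G1) s1 add1n.
        by case: (k) => // k' /=; rewrite ltnS.
    case/connectP: cm => p pp mE.
    have UN : G1 :|: G2 \subset ~: M by rewrite subUset G1N G2N.
    have lM : last s p \in M by rewrite -mE.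
    case: (@reach T e M G1 G2 p UN s sI pp lM).
    + case=> z [m' [m'M [[z1 [z2 cz]]|[z2 [z1 cz]]]]].
      * exact: (@walk_dist T e M e_sym G1 G2 z m' z1 z2 m'M G2N cz).
      * apply: dsym; exact: (@walk_dist T e M e_sym G2 G1 z m' z2 z1 m'M G1N cz).
    + by case; rewrite inE s1.
  case: (boolP [exists s, [&& s \in S, s \in F1 & s \notin F2]]).
    by case/existsP=> s /and3P [sS s1 s2]; apply: (key _ _ s).
  case: (boolP [exists s, [&& s \in S, s \in F2 & s \notin F1]]).
    by case/existsP=> s /and3P [sS s2 s1] _; apply: dsym; apply: (key _ _ s).
  rewrite !negb_exists => /forallP n21 /forallP n12; exfalso.
  idtac.
  move/negP: neq; apply; apply/eqP/setP=> x; rewrite !inE.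
  move: (n21 x) (n12 x); case: (x \in S); case: (x \in F1); case: (x \in F2) => //.
Qed.
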